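(* Let $\alpha$ be a nonzero real number. A regular curve in $\mathbb H^2$ with constant curvature, not passing through $N$, is an $\alpha$-stationary curve if and only if one of the following holds: (1) it is contained in a geodesic passing through $N$ (this case occurs for every value of $\alpha$); (2) it is contained in a circle of radius $r>0$ centered at $N$ and $\alpha=-r\coth(r)$ (this case occurs for every $r>0$).
   Context: Let $\langle x,y\rangle_\epsilon=x_1y_1+x_2y_2-x_3y_3$ be the Lorentzian inner product on $\mathbb R^3$ and $|x|_\epsilon=\sqrt{|\langle x,x\rangle_\epsilon|}$. The hyperbolic plane is $\mathbb H^2=\{(x,y,z):x^2+y^2-z^2=-1,\ z>0\}$ with the induced metric. It is parametrized by $\Psi(u,v)=(\sinh u\cos v,\sinh u\sin v,\cosh u)$. Let $N=(0,0,1)$. The hyperbolic distance from $\Psi(u,v)$ to $N$ is $u$, and the circle of radius $r$ centered at $N$ is $\{\Psi(r,v):v\in\mathbb R\}$. For a regular curve $\gamma(t)=\Psi(u(t),v(t))$ with $u>0$, we have $|\gamma'|_\epsilon=\sqrt{u'^2+\sinh^2(u)v'^2}$. Its unit normal is $$\mathbf n=\frac{1}{|\gamma'|_\epsilon}\big(u'\sin v+\sinh u\cosh u\,v'\cos v,\ \sinh u\cosh u\,v'\sin v-u'\cos v,\ \sinh^2(u)v'\big).$$ Its (geodesic) curvature is $\kappa=\langle\gamma'',\mathbf n\rangle_\epsilon/|\gamma'|_\epsilon^2$. The energy is $$E_\alpha[\gamma]=\int_\gamma\mathsf d^\alpha ds=\int u^\alpha\sqrt{u'^2+\sinh^2(u)v'^2}\,dt,$$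 where $\mathsf d$ is the distance to $N$. An $\alpha$-stationary curve is a critical point of $E_\alpha$, i.e. $(u,v)$ satisfies its Euler–Lagrange equations. Throughout the paper, $\alpha\neq0$ and curves avoid $N$. *)

(* Defs.v *)
From Stdlib Require Import Reals.
From Coquelicot Require Import Coquelicot.
Open Scope R_scope.

Definition vec3 := (R * R * R)%type.
Definition c1 (x : vec3) : R := fst (fst x).
Definition c2 (x : vec3) : R := snd (fst x).
Definition c3 (x : vec3) : R := snd x.

Definition lor (x y : vec3) : R := c1 x * c1 y + c2 x * c2 y - c3 x * c3 y.
Definition lnorm (x : vec3) : R := sqrt (Rabs (lor x x)).

Definition H2 (p : vec3) : Prop := c1 p ^ 2 + c2 p ^ 2 - c3 p ^ 2 = -1 /\ 0 < c3 p.
Definition Npole : vec3 := (0, 0, 1).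
Definition Psi (u v : R) : vec3 := (sinh u * cos v, sinh u * sin v, cosh u).

Definition coth (x : R) : R := cosh x / sinh x.

(* Geodesics of H2: intersections of H2 with a plane through the origin
   with (Euclidean) normal vector c <> 0. *)
Definition geodesic (c : vec3) : vec3 -> Prop :=
  fun p => H2 p /\ c1 c * c1 p + c2 c * c2 p + c3 c * c3 p = 0.

Definition circleN (r : R) : vec3 -> Prop := fun p => exists w, p = Psi r w.

Definition inI (a b : Rbar) (t : R) : Prop := Rbar_lt a t /\ Rbar_lt t b.

Definition smooth_on (a b : Rbar) (f : R -> R) : Prop :=
  forall n t, inI a b t -> ex_derive (Derive_n f n) t.

Definition gamma (u v : R -> R) (t : R) : vec3 := Psi (u t) (v t).
Definition gamma1 (u v : R -> R) (t : R) : vec3 :=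
  (Derive (fun s => c1 (gamma u v s)) t,
   Derive (fun s => c2 (gamma u v s)) t,
   Derive (fun s => c3 (gamma u v s)) t).
Definition gamma2 (u v : R -> R) (t : R) : vec3 :=
  (Derive (Derive (fun s => c1 (gamma u v s))) t,
   Derive (Derive (fun s => c2 (gamma u v s))) t,
   Derive (Derive (fun s => c3 (gamma u v s))) t).

Definition regular_on (a b : Rbar) (u v : R -> R) : Prop :=
  forall t, inI a b t -> gamma1 u v t <> (0, 0, 0).

Definition nvec (u v : R -> R) (t : R) : vec3 :=
  let u' := Derive u t in let v' := Derive v t in
  let s := lnorm (gamma1 u v t) in
  ((u' * sin (v t) + sinh (u t) * cosh (u t) * v' * cos (v t)) / s,
   (sinh (u t) * cosh (u t) * v' * sin (v t) - u' * cos (v t)) / s,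
   (sinh (u t) ^ 2 * v') / s).

Definition curvature (u v : R -> R) (t : R) : R :=
  lor (gamma2 u v t) (nvec u v t) / (lnorm (gamma1 u v t)) ^ 2.

Definition constant_curvature_on (a b : Rbar) (u v : R -> R) : Prop :=
  exists k, forall t, inI a b t -> curvature u v t = k.

(* Lagrangian of E_alpha: L(u, v, u', v') = u^alpha sqrt(u'^2 + sinh^2 u v'^2). *)
Definition Lag (alpha x y p q : R) : R :=
  Rpower x alpha * sqrt (p ^ 2 + sinh x ^ 2 * q ^ 2).

(* Euler-Lagrange equations of E_alpha along (u,v) on the interval. *)
Definition stationary (alpha : R) (a b : Rbar) (u v : R -> R) : Prop :=
  forall t, inI a b t ->
    is_derive (fun s => Derive (fun p => Lag alpha (u s) (v s) p (Derive v s)) (Derive u s)) t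
              (Derive (fun x => Lag alpha x (v t) (Derive u t) (Derive v t)) (u t))
 /\ is_derive (fun s => Derive (fun q => Lag alpha (u s) (v s) (Derive u s) q) (Derive v s)) t
              (Derive (fun y => Lag alpha (u t) y (Derive u t) (Derive v t)) (v t)).

Definition contained_in_geodesic_through_N (a b : Rbar) (u v : R -> R) : Prop :=
  exists c : vec3, c <> (0, 0, 0) /\ geodesic c Npole /\
    forall t, inI a b t -> geodesic c (gamma u v t).

Definition contained_in_circleN (r : R) (a b : Rbar) (u v : R -> R) : Prop :=
  forall t, inI a b t -> circleN r (gamma u v t).

(* Main.v *)
Require Import Defs.
From Stdlib Require Import Reals Lra Psatz.
From Coquelicot Require Import Coquelicot.
Open Scope R_scope.

Lemma inI_loc a b t : inI a b t -> locally t (fun s => inI a b s).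
Proof.
  intros [H1 H2]. destruct (Rbar_lt_locally a b t H1 H2) as [d Hd].
  exists d. intros y Hy. apply Hd. exact Hy.
Qed.

Lemma inI_conv a b x y z : inI a b x -> inI a b y -> Rmin x y <= z <= Rmax x y -> inI a b z.
Proof.
  intros [Hx1 Hx2] [Hy1 Hy2] [Hz1 Hz2]. unfold inI.
  assert (Hm : Rmin x y = x \/ Rmin x y = y) by (unfold Rmin; destruct Rle_dec; auto).
  assert (HM : Rmax x y = x \/ Rmax x y = y) by (unfold Rmax; destruct Rle_dec; auto).
  split.
  - destruct a as [a| |]; simpl in *; try tauto. destruct Hm as [Hm|Hm]; rewrite Hm in Hz1; lra.
  - destruct b as [b| |]; simpl in *; try tauto. destruct HM as [HM|HM]; rewrite HM in Hz2; lra.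
Qed.

Lemma const_on a b f : (forall t, inI a b t -> is_derive f t 0) ->
  forall x y, inI a b x -> inI a b y -> f x = f y.
Proof.
  intros Hd x y Hx Hy.
  destruct (MVT_gen f x y (fun _ => 0)) as [c [_ Hc]].
  - intros z Hz. apply Hd. apply (inI_conv a b x y z Hx Hy). lra.
  - intros z Hz. apply (proj2 (continuity_pt_filterlim _ _)).
    assert (Hz' : inI a b z) by (apply (inI_conv a b x y z Hx Hy); lra).
    exact (ex_derive_continuous f z (ex_intro _ 0 (Hd z Hz'))).
  - lra.
Qed.

Lemma loc_zero_deriv (f : R -> R) c t : locally t (fun s => f s = c) -> is_derive f t 0.
Proof.
  intros H. apply (is_derive_ext_loc (fun _ => c)).
  - apply filter_imp with (2 := H). intros s Hs; auto.
  - auto_derive; auto.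
Qed.

Lemma inI_ex a b : Rbar_lt a b -> exists t, inI a b t.
Proof.
  intros H. unfold inI.
  destruct a as [a| |]; destruct b as [b| |]; simpl in *; try tauto.
  - exists ((a+b)/2). lra.
  - exists (a+1). lra.
  - exists (b-1). lra.
  - exists 0. tauto.
Qed.

Ltac eta_fix := repeat match goal with |- context[Derive (fun y => ?f y)] => change (fun y => f y) with f end.

Lemma sinh_pos x : 0 < x -> 0 < sinh x.
Proof. intros; rewrite <- sinh_0; apply sinh_lt; auto. Qed.

Lemma cosh_pos x : 0 < cosh x.
Proof. unfold cosh. pose proof (exp_pos x); pose proof (exp_pos (-x)). lra. Qed.

Lemma ch2sh2 x : cosh x ^ 2 - sinh x ^ 2 = 1.
Proof. unfold cosh, sinh. rewrite exp_Ropp. pose proof (exp_pos x). field. lra. Qed.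

Definition E1 (u v : R -> R) s := cosh (u s) * Derive u s * cos (v s) - sinh (u s) * Derive v s * sin (v s).
Definition E2 (u v : R -> R) s := cosh (u s) * Derive u s * sin (v s) + sinh (u s) * Derive v s * cos (v s).
Definition E3 (u v : R -> R) s := sinh (u s) * Derive u s.

Lemma d_c1 (u v : R -> R) (s : R) : ex_derive u s -> ex_derive v s ->
  is_derive (fun s => Defs.c1 (gamma u v s)) s (E1 u v s).
Proof.
  intros. unfold gamma, Psi, Defs.c1, E1; simpl. unfold sinh, cosh. auto_derive.
  - auto.
  - eta_fix. field.
Qed.
Lemma d_c2 (u v : R -> R) (s : R) : ex_derive u s -> ex_derive v s ->
  is_derive (fun s => Defs.c2 (gamma u v s)) s (E2 u v s).
Proof.
  intros. unfold gamma, Psi, Defs.c2, E2; simpl. unfold sinh, cosh. auto_derive.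
  - auto.
  - eta_fix. field.
Qed.
Lemma d_c3 (u v : R -> R) (s : R) : ex_derive u s -> ex_derive v s ->
  is_derive (fun s => Defs.c3 (gamma u v s)) s (E3 u v s).
Proof.
  intros. unfold gamma, Psi, Defs.c3, E3; simpl. unfold sinh, cosh. auto_derive.
  - auto.
  - eta_fix. field.
Qed.

Lemma gamma1_eq (u v : R -> R) t : ex_derive u t -> ex_derive v t ->
  gamma1 u v t = (E1 u v t, E2 u v t, E3 u v t).
Proof.
  intros. unfold gamma1. repeat f_equal; apply is_derive_unique.
  apply d_c1; auto. apply d_c2; auto. apply d_c3; auto.
Qed.

Lemma gamma2_eq (a b : Rbar) (u v : R -> R) t : inI a b t ->
  (forall s, inI a b s -> ex_derive u s /\ ex_derive v s) ->
  ex_derive (Derive u) t -> ex_derive (Derive v) t ->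
  let U := u t in let U1 := Derive u t in let U2 := Derive (Derive u) t in
  let V := v t in let V1 := Derive v t in let V2 := Derive (Derive v) t in
  let P2 := sinh U * U1 ^ 2 + cosh U * U2 - sinh U * V1 ^ 2 in
  let Q2 := 2 * cosh U * U1 * V1 + sinh U * V2 in
  gamma2 u v t = (P2 * cos V - Q2 * sin V, P2 * sin V + Q2 * cos V,
                  cosh U * U1 ^ 2 + sinh U * U2).
Proof.
  intros Ht Hd Hu2 Hv2. destruct (Hd t Ht) as [Hu Hv]. unfold gamma2. simpl.
  assert (L : forall (f g : R -> R), (forall s, inI a b s -> is_derive f s (g s)) ->
     Derive (Derive f) t = Derive g t).
  { intros f g Hfg. apply Derive_ext_loc. apply filter_imp with (2 := inI_loc a b t Ht).
    intros s Hs. apply is_derive_unique. auto. }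
  repeat f_equal.
  - rewrite (L _ (E1 u v)) by (intros s Hs; destruct (Hd s Hs); apply d_c1; auto).
    apply is_derive_unique. unfold E1, sinh, cosh. auto_derive.
    + repeat split; auto.
    + eta_fix. field.
  - rewrite (L _ (E2 u v)) by (intros s Hs; destruct (Hd s Hs); apply d_c2; auto).
    apply is_derive_unique. unfold E2, sinh, cosh. auto_derive.
    + repeat split; auto.
    + eta_fix. field.
  - rewrite (L _ (E3 u v)) by (intros s Hs; destruct (Hd s Hs); apply d_c3; auto).
    apply is_derive_unique. unfold E3, sinh, cosh. auto_derive.
    + repeat split; auto.
    + eta_fix. field.
Qed.

Ltac tri := apply (f_equal2 (@pair _ _)); [apply (f_equal2 (@pair _ _))|].

Lemma cs2 x : cos x ^ 2 + sin x ^ 2 = 1.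
Proof. rewrite <- (sin2_cos2 x). unfold Rsqr. ring. Qed.

Lemma lor_rot p q z p' q' z' c s :
  lor (p*c - q*s, p*s + q*c, z) (p'*c - q'*s, p'*s + q'*c, z') = (p*p' + q*q')*(c^2+s^2) - z*z'.
Proof. unfold lor, Defs.c1, Defs.c2, Defs.c3; simpl. ring. Qed.

Definition S2f (u v : R -> R) t := Derive u t ^ 2 + sinh (u t) ^ 2 * Derive v t ^ 2.

Lemma lnorm_eq (u v : R -> R) t : ex_derive u t -> ex_derive v t ->
  lnorm (gamma1 u v t) = sqrt (S2f u v t) /\ lor (gamma1 u v t) (gamma1 u v t) = S2f u v t.
Proof.
  intros Hu Hv. rewrite gamma1_eq by auto.
  assert (H : lor (E1 u v t, E2 u v t, E3 u v t) (E1 u v t, E2 u v t, E3 u v t) = S2f u v t).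
  { replace (E1 u v t, E2 u v t, E3 u v t) with
     ((cosh (u t) * Derive u t) * cos (v t) - (sinh (u t) * Derive v t) * sin (v t),
      (cosh (u t) * Derive u t) * sin (v t) + (sinh (u t) * Derive v t) * cos (v t),
      E3 u v t) by (unfold E1, E2; tri; ring).
    rewrite lor_rot, cs2. unfold E3, S2f.
    unfold sinh, cosh. rewrite exp_Ropp. pose proof (exp_pos (u t)). field. lra. }
  split; auto. unfold lnorm. rewrite H. f_equal. apply Rabs_pos_eq.
  unfold S2f. nra.
Qed.

Lemma nvec_rot (u v : R -> R) t :
  let L := lnorm (gamma1 u v t) in
  nvec u v t = ((sinh (u t) * cosh (u t) * Derive v t / L) * cos (v t) - (- Derive u t / L) * sin (v t),
                (sinh (u t) * cosh (u t) * Derive v t / L) * sin (v t) + (- Derive u t / L) * cos (v t),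
                sinh (u t) ^ 2 * Derive v t / L).
Proof. intros L. unfold nvec. fold L. tri; unfold Rdiv; ring. Qed.

Definition Pf (u v : R -> R) t :=
  let U := u t in let U1 := Derive u t in let U2 := Derive (Derive u) t in
  let V1 := Derive v t in let V2 := Derive (Derive v) t in
  sinh U * U2 * V1 - sinh U ^ 2 * cosh U * V1 ^ 3 - U1 * V2 * sinh U - 2 * U1 ^ 2 * V1 * cosh U.

Lemma curv_eq (a b : Rbar) (u v : R -> R) t : inI a b t ->
  (forall s, inI a b s -> ex_derive u s /\ ex_derive v s) ->
  ex_derive (Derive u) t -> ex_derive (Derive v) t ->
  0 < S2f u v t ->
  curvature u v t * sqrt (S2f u v t) ^ 3 = Pf u v t.
Proof.
  intros Ht Hd Hu2 Hv2 HS. destruct (Hd t Ht) as [Hu Hv].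
  pose proof (gamma2_eq a b u v t Ht Hd Hu2 Hv2) as G. cbv zeta in G.
  destruct (lnorm_eq u v t Hu Hv) as [HL _].
  unfold curvature. rewrite G, nvec_rot, lor_rot, cs2, HL.
  pose proof (sqrt_lt_R0 _ HS) as Sp.
  assert (Sq : sqrt (S2f u v t) * sqrt (S2f u v t) = S2f u v t) by (apply sqrt_sqrt; lra).
  set (S := sqrt (S2f u v t)) in *. unfold S2f in Sq. unfold Pf.
  clearbody S. unfold sinh, cosh. rewrite !exp_Ropp. pose proof (exp_pos (u t)).
  field. lra.
Qed.

Ltac fix_sqrt T := repeat match goal with |- context[sqrt ?e] =>
   tryif (constr_eq e T) then fail else (replace (sqrt e) with (sqrt T) by (f_equal; field)) end.

Lemma dLag_p al x y p q : 0 < p^2 + sinh x^2 * q^2 ->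
  Derive (fun p => Lag al x y p q) p = Rpower x al * p / sqrt (p^2 + sinh x^2 * q^2).
Proof.
  intros H. apply is_derive_unique. unfold Lag. auto_derive.
  - auto.
  - fix_sqrt (p^2 + sinh x^2 * q^2). pose proof (sqrt_lt_R0 _ H). field. lra.
Qed.

Lemma dLag_q al x y p q : 0 < p^2 + sinh x^2 * q^2 ->
  Derive (fun q => Lag al x y p q) q = Rpower x al * sinh x ^ 2 * q / sqrt (p^2 + sinh x^2 * q^2).
Proof.
  intros H. apply is_derive_unique. unfold Lag. auto_derive.
  - auto.
  - fix_sqrt (p^2 + sinh x^2 * q^2). pose proof (sqrt_lt_R0 _ H). field. lra.
Qed.

Lemma dLag_y al x y p q : Derive (fun y => Lag al x y p q) y = 0.
Proof. apply is_derive_unique. unfold Lag. auto_derive; try easy; ring. Qed.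

Lemma dLag_x al x y p q : 0 < x -> 0 < p^2 + sinh x^2 * q^2 ->
  Derive (fun x => Lag al x y p q) x =
   al * Rpower x al / x * sqrt (p^2 + sinh x^2 * q^2)
   + Rpower x al * sinh x * cosh x * q ^ 2 / sqrt (p^2 + sinh x^2 * q^2).
Proof.
  intros Hx H. apply is_derive_unique. unfold Lag.
  pose proof (sqrt_lt_R0 _ H).
  unfold Rpower, sinh, cosh in *. auto_derive.
  - split; [exact Hx|split; [|exact I]]. apply (Rlt_le_trans _ _ _ H); right; field.
  - fix_sqrt (p ^ 2 + ((exp x - exp (- x)) / 2) ^ 2 * q ^ 2).
    rewrite !exp_Ropp in *. pose proof (exp_pos x). field. lra.
Qed.

Definition Ff al (u v : R -> R) s := Rpower (u s) al * Derive u s / sqrt (S2f u v s).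
Definition Gf al (u v : R -> R) s := Rpower (u s) al * sinh (u s) ^ 2 * Derive v s / sqrt (S2f u v s).

Definition Spr U1 U2 V1 V2 sh ch S := (U1*U2 + sh*ch*U1*V1^2 + sh^2*V1*V2)/S.
Definition FE al A U U1 U2 V1 V2 sh ch S :=
  (al*A/U*U1^2 + A*U2)/S - A*U1*Spr U1 U2 V1 V2 sh ch S/S^2.
Definition GE al A U U1 U2 V1 V2 sh ch S :=
  (al*A/U*U1*sh^2*V1 + 2*A*sh*ch*U1*V1 + A*sh^2*V2)/S - A*sh^2*V1*Spr U1 U2 V1 V2 sh ch S/S^2.
Definition LX al A U V1 sh ch S := al*A/U*S + A*sh*ch*V1^2/S.

Lemma dFf al (u v : R -> R) t : ex_derive u t -> ex_derive v t -> ex_derive (Derive u) t ->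
  ex_derive (Derive v) t -> 0 < u t -> 0 < S2f u v t ->
  is_derive (Ff al u v) t (FE al (Rpower (u t) al) (u t) (Derive u t) (Derive (Derive u) t)
     (Derive v t) (Derive (Derive v) t) (sinh (u t)) (cosh (u t)) (sqrt (S2f u v t))).
Proof.
  intros Hu Hv Hu2 Hv2 Hp HS. pose proof (sqrt_lt_R0 _ HS).
  unfold Ff, FE, Spr, S2f, Rpower, sinh, cosh in *. auto_derive.
  - repeat split; auto; try (apply (Rlt_le_trans _ _ _ HS); right; field).
    fix_sqrt (Derive u t ^ 2 + ((exp (u t) - exp (- u t)) / 2) ^ 2 * Derive v t ^ 2). lra.
  - eta_fix. fix_sqrt (Derive u t ^ 2 + ((exp (u t) - exp (- u t)) / 2) ^ 2 * Derive v t ^ 2).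
    rewrite !exp_Ropp in *. pose proof (exp_pos (u t)). field. repeat split; lra.
Qed.

Lemma dGf al (u v : R -> R) t : ex_derive u t -> ex_derive v t -> ex_derive (Derive u) t ->
  ex_derive (Derive v) t -> 0 < u t -> 0 < S2f u v t ->
  is_derive (Gf al u v) t (GE al (Rpower (u t) al) (u t) (Derive u t) (Derive (Derive u) t)
     (Derive v t) (Derive (Derive v) t) (sinh (u t)) (cosh (u t)) (sqrt (S2f u v t))).
Proof.
  intros Hu Hv Hu2 Hv2 Hp HS. pose proof (sqrt_lt_R0 _ HS).
  unfold Gf, GE, Spr, S2f, Rpower, sinh, cosh in *. auto_derive.
  - repeat split; auto; try (apply (Rlt_le_trans _ _ _ HS); right; field).
    fix_sqrt (Derive u t ^ 2 + ((exp (u t) - exp (- u t)) / 2) ^ 2 * Derive v t ^ 2). lra.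
  - eta_fix. fix_sqrt (Derive u t ^ 2 + ((exp (u t) - exp (- u t)) / 2) ^ 2 * Derive v t ^ 2).
    rewrite !exp_Ropp in *. pose proof (exp_pos (u t)). field. repeat split; lra.
Qed.

Definition good (a b : Rbar) (u v : R -> R) := forall s, inI a b s ->
  ex_derive u s /\ ex_derive v s /\ ex_derive (Derive u) s /\ ex_derive (Derive v) s /\
  0 < u s /\ 0 < S2f u v s.

Lemma S2_pos (u v : R -> R) t : ex_derive u t -> ex_derive v t -> 0 < u t ->
  gamma1 u v t <> (0,0,0) -> 0 < S2f u v t.
Proof.
  intros Hu Hv Hp Hg. pose proof (sinh_pos _ Hp) as Hs.
  unfold S2f. destruct (Req_dec (Derive u t) 0) as [Z1|E1].
  - destruct (Req_dec (Derive v t) 0) as [Z2|E2].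
    + exfalso. apply Hg. rewrite gamma1_eq by auto. unfold E1, E2, E3.
      rewrite Z1, Z2. tri; ring.
    + pose proof (Rsqr_pos_lt _ E2). pose proof (Rsqr_pos_lt (sinh (u t)) ltac:(lra)).
      unfold Rsqr in *. assert (0 < (sinh (u t) * sinh (u t)) * (Derive v t * Derive v t)) by (apply Rmult_lt_0_compat; auto).
      nra.
  - pose proof (Rsqr_pos_lt _ E1). unfold Rsqr in *. nra.
Qed.

Lemma EL_at al a b (u v : R -> R) t : good a b u v -> inI a b t ->
  let A := Rpower (u t) al in let U := u t in let U1 := Derive u t in
  let U2 := Derive (Derive u) t in let V1 := Derive v t in let V2 := Derive (Derive v) t in
  let sh := sinh (u t) in let ch := cosh (u t) in let S := sqrt (S2f u v t) in
  ((is_derive (fun s => Derive (fun p => Lag al (u s) (v s) p (Derive v s)) (Derive u s)) t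
              (Derive (fun x => Lag al x (v t) (Derive u t) (Derive v t)) (u t))
 /\ is_derive (fun s => Derive (fun q => Lag al (u s) (v s) (Derive u s) q) (Derive v s)) t
              (Derive (fun y => Lag al (u t) y (Derive u t) (Derive v t)) (v t)))
  <-> (FE al A U U1 U2 V1 V2 sh ch S = LX al A U V1 sh ch S /\ GE al A U U1 U2 V1 V2 sh ch S = 0)).
Proof.
  intros Hg Ht. cbv zeta.
  destruct (Hg t Ht) as (Hu & Hv & Hu2 & Hv2 & Hp & HS).
  assert (LF : locally t (fun s => Ff al u v s =
      Derive (fun p => Lag al (u s) (v s) p (Derive v s)) (Derive u s))).
  { apply filter_imp with (2 := inI_loc a b t Ht). intros s Hs.
    destruct (Hg s Hs) as (_ & _ & _ & _ & _ & HSs). rewrite dLag_p by exact HSs. reflexivity. }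
  assert (LG : locally t (fun s => Gf al u v s =
      Derive (fun q => Lag al (u s) (v s) (Derive u s) q) (Derive v s))).
  { apply filter_imp with (2 := inI_loc a b t Ht). intros s Hs.
    destruct (Hg s Hs) as (_ & _ & _ & _ & _ & HSs). rewrite dLag_q by exact HSs. reflexivity. }
  pose proof (is_derive_ext_loc _ _ _ _ LF (dFf al u v t Hu Hv Hu2 Hv2 Hp HS)) as DF.
  pose proof (is_derive_ext_loc _ _ _ _ LG (dGf al u v t Hu Hv Hu2 Hv2 Hp HS)) as DG.
  rewrite dLag_x by auto. rewrite dLag_y.
  split.
  - intros [H1 H2]. split.
    + apply is_derive_unique in H1. apply is_derive_unique in DF. rewrite <- DF. exact H1.
    + apply is_derive_unique in H2. apply is_derive_unique in DG. rewrite <- DG. exact H2.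
  - intros [H1 H2]. split.
    + rewrite H1 in DF. exact DF.
    + rewrite H2 in DG. exact DG.
Qed.

Lemma alg_conv al A U U1 U2 V1 V2 sh ch S : 0 < A -> 0 < U -> 0 < sh -> 0 < S ->
  FE al A U U1 U2 V1 V2 sh ch S = LX al A U V1 sh ch S -> GE al A U U1 U2 V1 V2 sh ch S = 0 ->
  sh*U2*V1 - sh^2*ch*V1^3 - U1*V2*sh - 2*U1^2*V1*ch = al*sh*V1*S^2/U.
Proof.
  intros HA HU Hs HS H1 H2.
  assert (Id : sh^2*V1*(FE al A U U1 U2 V1 V2 sh ch S - LX al A U V1 sh ch S) - U1*GE al A U U1 U2 V1 V2 sh ch S
     = (A*sh/S)*((sh*U2*V1 - sh^2*ch*V1^3 - U1*V2*sh - 2*U1^2*V1*ch) - al*sh*V1*S^2/U)).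
  { unfold FE, GE, LX, Spr. field. lra. }
  rewrite H1, H2 in Id.
  assert (K : A*sh/S <> 0).
  { apply Rgt_not_eq. unfold Rdiv. apply Rmult_lt_0_compat. apply Rmult_lt_0_compat; auto. apply Rinv_0_lt_compat; auto. }
  assert (Z : (A*sh/S)*((sh*U2*V1 - sh^2*ch*V1^3 - U1*V2*sh - 2*U1^2*V1*ch) - al*sh*V1*S^2/U) = 0) by (rewrite <- Id; ring).
  apply Rmult_integral in Z. destruct Z as [Z|Z]; [contradiction|lra].
Qed.

Lemma alg_geo al A U U1 U2 sh ch S : 0 < U -> 0 < S -> S^2 = U1^2 ->
  FE al A U U1 U2 0 0 sh ch S = LX al A U 0 sh ch S /\ GE al A U U1 U2 0 0 sh ch S = 0.
Proof.
  intros HU HS E. split.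
  - assert (Id : FE al A U U1 U2 0 0 sh ch S - LX al A U 0 sh ch S =
       (U1^2 - S^2) * (al*A/(U*S) - A*U2/S^3)) by (unfold FE, LX, Spr; field; lra).
    rewrite E in Id. lra.
  - unfold GE, Spr. field. lra.
Qed.

Lemma alg_circ al A U V1 V2 sh ch S : 0 < U -> 0 < S -> 0 < sh -> S^2 = sh^2*V1^2 ->
  al = - U * (ch / sh) ->
  FE al A U 0 0 V1 V2 sh ch S = LX al A U V1 sh ch S /\ GE al A U 0 0 V1 V2 sh ch S = 0.
Proof.
  intros HU HS Hs E Ha. subst al. split.
  - assert (Id : FE (- U * (ch / sh)) A U 0 0 V1 V2 sh ch S - LX (- U * (ch / sh)) A U V1 sh ch S =
       A*ch*(S^2 - sh^2*V1^2)/(sh*S)) by (unfold FE, LX, Spr; field; lra).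
    rewrite E in Id. replace (sh ^ 2 * V1 ^ 2 - sh ^ 2 * V1 ^ 2) with 0 in Id by ring.
    unfold Rdiv in Id. rewrite Rmult_0_r, Rmult_0_l in Id. lra.
  - assert (Id : GE (- U * (ch / sh)) A U 0 0 V1 V2 sh ch S =
       A*sh^2*V2*(S^2 - sh^2*V1^2)/S^3) by (unfold GE, Spr; field; lra).
    rewrite E in Id. replace (sh ^ 2 * V1 ^ 2 - sh ^ 2 * V1 ^ 2) with 0 in Id by ring.
    unfold Rdiv in Id. rewrite Rmult_0_r, Rmult_0_l in Id. lra.
Qed.

Lemma shch_gt x : 0 < x -> x < sinh x * cosh x.
Proof.
  intros Hx.
  destruct (MVT_cor2 (fun y => sinh y * cosh y - y) (fun y => 2 * sinh y ^ 2) 0 x Hx) as [c [Hc1 Hc2]].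
  - intros c _. apply is_derive_Reals. unfold sinh, cosh. auto_derive; auto.
    rewrite !exp_Ropp. pose proof (exp_pos c). field. lra.
  - rewrite sinh_0, cosh_0 in Hc1. pose proof (sinh_pos c ltac:(lra)).
    assert (0 < 2 * sinh c ^ 2 * (x - 0)) by (apply Rmult_lt_0_compat; [nra|lra]). lra.
Qed.

Lemma h_contra al x : 0 < x -> (al+1)*sinh x + x*cosh x = 0 -> (al+2)*cosh x + x*sinh x = 0 -> False.
Proof.
  intros Hx H1 H2.
  assert (E : sinh x * ((al+2)*cosh x + x*sinh x) - cosh x * ((al+1)*sinh x + x*cosh x)
     = sinh x * cosh x - x * (cosh x^2 - sinh x^2)) by ring.
  rewrite H1, H2, ch2sh2 in E. pose proof (shch_gt x Hx). lra.
Qed.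

Lemma dK al (u : R -> R) t : ex_derive u t -> 0 < u t ->
  is_derive (fun s => Rpower (u s) al * u s * sinh (u s)) t
    (Rpower (u t) al * Derive u t * ((al+1)*sinh (u t) + u t * cosh (u t))).
Proof.
  intros Hu Hp. unfold Rpower, sinh, cosh. auto_derive.
  - repeat split; auto.
  - eta_fix. rewrite !exp_Ropp. pose proof (exp_pos (u t)). field. lra.
Qed.

Lemma dh al (u : R -> R) t : ex_derive u t ->
  is_derive (fun s => (al+1)*sinh (u s) + u s * cosh (u s)) t
    (((al+2)*cosh (u t) + u t * sinh (u t)) * Derive u t).
Proof.
  intros Hu. unfold sinh, cosh. auto_derive.
  - repeat split; auto.
  - eta_fix. rewrite !exp_Ropp. pose proof (exp_pos (u t)). field. all: lra.
Qed.

Lemma Derive_loc_const (f : R -> R) c t : locally t (fun s => f s = c) -> Derive f t = 0.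
Proof. intros H. apply is_derive_unique. apply (loc_zero_deriv f c t H). Qed.

Lemma D2_zero a b (f : R -> R) t : inI a b t -> (forall s, inI a b s -> Derive f s = 0) ->
  Derive (Derive f) t = 0.
Proof.
  intros Ht H. apply (Derive_loc_const _ 0). apply filter_imp with (2 := inI_loc a b t Ht). auto.
Qed.

Lemma nonzero_loc (f : R -> R) t : ex_derive f t -> f t <> 0 -> locally t (fun s => f s <> 0).
Proof.
  intros Hd Hn. pose proof (ex_derive_continuous f t Hd) as Hc.
  unfold continuous, filterlim, filter_le, filtermap in Hc. apply (Hc (fun y => y <> 0)). exists (mkposreal _ (Rabs_pos_lt _ Hn)). intros y Hy.
  assert (Rabs (y - f t) < Rabs (f t)) by exact Hy.
  intros E. rewrite E in H. rewrite Rminus_0_l, Rabs_Ropp in H. lra.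
Qed.

Theorem theorem2p5 (alpha : R) (a b : Rbar) (u v : R -> R) :
  alpha <> 0 ->
  Rbar_lt a b ->
  smooth_on a b u -> smooth_on a b v ->
  (forall t, inI a b t -> 0 < u t) ->
  regular_on a b u v ->
  constant_curvature_on a b u v ->
  (stationary alpha a b u v <->
     contained_in_geodesic_through_N a b u v \/
     exists r, 0 < r /\ contained_in_circleN r a b u v /\ alpha = - r * coth r).
Proof.
  intros Hal Hab Hsu Hsv Hpos Hreg Hcurv.
  assert (Hg : good a b u v).
  { intros s Hs.
    assert (Hu : ex_derive u s) by exact (Hsu 0%nat s Hs).
    assert (Hv : ex_derive v s) by exact (Hsv 0%nat s Hs).
    repeat split; auto.
    - exact (Hsu 1%nat s Hs).
    - exact (Hsv 1%nat s Hs).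
    - apply S2_pos; auto. }
  destruct (inI_ex a b Hab) as [t0 Ht0].
  assert (Hd2 : forall s, inI a b s -> ex_derive u s /\ ex_derive v s)
    by (intros s Hs; destruct (Hg s Hs) as (? & ? & _); auto).
  split.
  - intros Hst. destruct Hcurv as [k Hk].
    assert (HK : forall t, inI a b t ->
      k * (Rpower (u t) alpha * u t * sinh (u t)) = alpha * Gf alpha u v t).
    { intros t Ht. destruct (Hg t Ht) as (Hu & Hv & Hu2 & Hv2 & Hp & HS).
      pose proof (EL_at alpha a b u v t Hg Ht) as E. cbv zeta in E.
      destruct (proj1 E (Hst t Ht)) as [E1 E2].
      pose proof (sinh_pos _ Hp) as Hsh.
      pose proof (sqrt_lt_R0 _ HS) as HSq.
      assert (HA : 0 < Rpower (u t) alpha) by apply exp_pos.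
      pose proof (alg_conv _ _ _ _ _ _ _ _ _ _ HA Hp Hsh HSq E1 E2) as HP.
      pose proof (curv_eq a b u v t Ht Hd2 Hu2 Hv2 HS) as HC.
      rewrite (Hk t Ht) in HC. unfold Pf in HC. cbv zeta in HC. rewrite HP in HC.
      unfold Gf.
      set (S := sqrt (S2f u v t)) in *. set (A := Rpower (u t) alpha) in *.
      assert (Id : k * (A * u t * sinh (u t)) - alpha * (A * sinh (u t) ^ 2 * Derive v t / S) =
        (A * sinh (u t) * u t / S^3) * (k * S^3 - alpha * sinh (u t) * Derive v t * S^2 / u t))
        by (field; lra).
      rewrite HC in Id. replace (alpha * sinh (u t) * Derive v t * S ^ 2 / u t -
        alpha * sinh (u t) * Derive v t * S ^ 2 / u t) with 0 in Id by ring.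
      rewrite Rmult_0_r in Id. lra. }
    assert (HGc : forall t, inI a b t -> Gf alpha u v t = Gf alpha u v t0).
    { assert (L : forall s, inI a b s -> Gf alpha u v s =
        Derive (fun q => Lag alpha (u s) (v s) (Derive u s) q) (Derive v s)).
      { intros s Hs. destruct (Hg s Hs) as (_ & _ & _ & _ & _ & HSs). rewrite dLag_q by exact HSs. reflexivity. }
      intros t Ht. rewrite (L t Ht), (L t0 Ht0).
      apply (const_on a b (fun s => Derive (fun q => Lag alpha (u s) (v s) (Derive u s) q) (Derive v s))); auto.
      intros s Hs. destruct (Hst s Hs) as [_ H2]. rewrite dLag_y in H2. exact H2. }
    destruct (Req_dec k 0) as [Hk0|Hk0].
    + left.
      assert (HV1 : forall t, inI a b t -> Derive v t = 0).
      { intros t Ht. pose proof (HK t Ht) as E. rewrite Hk0, Rmult_0_l in E.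
        destruct (Hg t Ht) as (Hu & Hv & _ & _ & Hp & HS).
        pose proof (sinh_pos _ Hp). pose proof (sqrt_lt_R0 _ HS).
        assert (HA : 0 < Rpower (u t) alpha) by apply exp_pos.
        unfold Gf in E.
        set (S := sqrt (S2f u v t)) in *. set (A := Rpower (u t) alpha) in *.
        assert (G0 : A * sinh (u t) ^ 2 * Derive v t / S = 0).
        { apply (Rmult_eq_reg_l alpha); [|exact Hal]. rewrite <- E. ring. }
        replace (Derive v t) with ((A * sinh (u t) ^ 2 * Derive v t / S) * (S / (A * sinh (u t) ^ 2)))
          by (field; lra).
        rewrite G0. ring. }
      assert (Hvc : forall t, inI a b t -> v t = v t0).
      { intros t Ht. apply (const_on a b v); auto. intros s Hs.
        rewrite <- (HV1 s Hs). apply Derive_correct. apply Hd2; auto. }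
      exists (- sin (v t0), cos (v t0), 0). split; [|split].
      * intros E. injection E. intros E1 E2. pose proof (cs2 (v t0)). 
        assert (sin (v t0) = 0) by lra. rewrite E1, H0 in H. lra.
      * unfold geodesic, H2, Npole, Defs.c1, Defs.c2, Defs.c3; simpl. split; [split; lra|ring].
      * intros t Ht. unfold geodesic, H2, gamma, Psi, Defs.c1, Defs.c2, Defs.c3; cbn [fst snd].
        rewrite (Hvc t Ht). split; [split|].
        -- pose proof (cs2 (v t0)). pose proof (ch2sh2 (u t)).
           replace ((sinh (u t) * cos (v t0)) ^ 2 + (sinh (u t) * sin (v t0)) ^ 2) with
             (sinh (u t) ^ 2 * (cos (v t0) ^ 2 + sin (v t0) ^ 2)) by ring. rewrite H, Rmult_1_r. lra.
        -- apply cosh_pos.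
        -- ring.
    + right.
      assert (Hh : forall s, inI a b s ->
        Derive u s * ((alpha+1)*sinh (u s) + u s * cosh (u s)) = 0).
      { intros s Hs. destruct (Hg s Hs) as (Hu & _ & _ & _ & Hp & _).
        assert (Kc : locally s (fun y => Rpower (u y) alpha * u y * sinh (u y) = alpha * Gf alpha u v t0 / k)).
        { apply filter_imp with (2 := inI_loc a b s Hs). intros y Hy.
          rewrite <- (HGc y Hy), <- (HK y Hy). field. exact Hk0. }
        pose proof (Derive_loc_const _ _ _ Kc) as D0.
        assert (D1 : Rpower (u s) alpha * Derive u s * ((alpha+1)*sinh (u s) + u s * cosh (u s)) = 0)
          by (rewrite <- (is_derive_unique _ _ _ (dK alpha u s Hu Hp)); exact D0).
        assert (HA : 0 < Rpower (u s) alpha) by apply exp_pos.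
        apply (Rmult_eq_reg_l (Rpower (u s) alpha)); [|lra]. rewrite Rmult_0_r, <- D1. ring. }
      assert (HU1 : forall t, inI a b t -> Derive u t = 0).
      { intros t Ht. destruct (Req_dec (Derive u t) 0) as [Z|Z]; auto. exfalso.
        destruct (Hg t Ht) as (Hu & _ & Hu2 & _ & Hp & _).
        assert (L : locally t (fun s => (alpha+1)*sinh (u s) + u s * cosh (u s) = 0)).
        { apply filter_imp with (2 := filter_and _ _ (inI_loc a b t Ht) (nonzero_loc _ t Hu2 Z)).
          intros s [Hs Hn]. pose proof (Hh s Hs) as E.
          apply Rmult_integral in E. destruct E as [E|E]; [contradiction|exact E]. }
        pose proof (Derive_loc_const _ _ _ L) as D0.
        assert (D1 : ((alpha+2)*cosh (u t) + u t * sinh (u t)) * Derive u t = 0)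
          by (rewrite <- (is_derive_unique _ _ _ (dh alpha u t Hu)); exact D0).
        clear D0. apply Rmult_integral in D1. rename D1 into D0. destruct D0 as [D0|D0]; [|contradiction].
        assert (E : (alpha+1)*sinh (u t) + u t * cosh (u t) = 0).
        { pose proof (Hh t Ht) as E. apply Rmult_integral in E. destruct E as [E|E]; [contradiction|exact E]. }
        exact (h_contra alpha (u t) Hp E D0). }
      assert (Hr : forall t, inI a b t -> u t = u t0).
      { intros t Ht. apply (const_on a b u); auto. intros s Hs.
        rewrite <- (HU1 s Hs). apply Derive_correct. apply Hd2; auto. }
      exists (u t0). split; [apply Hpos; auto|split].
      * intros t Ht. exists (v t). unfold gamma. rewrite (Hr t Ht). reflexivity.
      * destruct (Hg t0 Ht0) as (Hu & Hv & Hu2 & Hv2 & Hp & HS).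
        pose proof (EL_at alpha a b u v t0 Hg Ht0) as E. cbv zeta in E.
        destruct (proj1 E (Hst t0 Ht0)) as [E1 E2].
        pose proof (sinh_pos _ Hp) as Hsh.
        pose proof (sqrt_lt_R0 _ HS) as HSq.
        assert (HA : 0 < Rpower (u t0) alpha) by apply exp_pos.
        pose proof (alg_conv _ _ _ _ _ _ _ _ _ _ HA Hp Hsh HSq E1 E2) as HP.
        rewrite (HU1 t0 Ht0), (D2_zero a b u t0 Ht0 HU1), pow2_sqrt in HP by lra.
        unfold S2f in HP, HS. rewrite (HU1 t0 Ht0) in HP, HS.
        assert (HV : Derive v t0 <> 0).
        { intros Z. rewrite Z in HS. lra. }
        unfold coth.
        set (V1 := Derive v t0) in *. set (sh := sinh (u t0)) in *. set (ch := cosh (u t0)) in *.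
        set (U := u t0) in *.
        assert (Hn : sh ^ 3 * V1 ^ 3 <> 0) by (apply Rmult_integral_contrapositive; split; apply pow_nonzero; lra).
        apply (Rmult_eq_reg_r (sh ^ 3 * V1 ^ 3)); [|exact Hn].
        replace (alpha * (sh ^ 3 * V1 ^ 3)) with
          (U * (alpha * sh * V1 * (0 ^ 2 + sh ^ 2 * V1 ^ 2) / U)) by (field; lra).
        rewrite <- HP. field. lra.
  - intros Hor t Ht.
    pose proof (EL_at alpha a b u v t Hg Ht) as E. cbv zeta in E. apply (proj2 E).
    destruct (Hg t Ht) as (Hu & Hv & Hu2 & Hv2 & Hp & HS).
    pose proof (sqrt_lt_R0 _ HS) as HSq. pose proof (sinh_pos _ Hp) as Hsh.
    destruct Hor as [Hgeo | (r & Hr & Hcirc & Har)].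
    + destruct Hgeo as (c & Hc0 & HcN & Hcg).
      destruct c as [[p1 p2] p3].
      unfold geodesic, Npole, gamma, Psi, Defs.c1, Defs.c2, Defs.c3 in HcN, Hcg; cbn [fst snd] in HcN, Hcg.
      destruct HcN as [_ HN]. assert (Hp3 : p3 = 0) by lra. subst p3.
      assert (Hw : forall s, inI a b s -> p1 * cos (v s) + p2 * sin (v s) = 0).
      { intros s Hs. destruct (Hcg s Hs) as [_ Hl]. pose proof (Hpos s Hs) as Hps.
        pose proof (sinh_pos _ Hps).
        apply (Rmult_eq_reg_l (sinh (u s))); [|lra]. rewrite Rmult_0_r, <- Hl. ring. }
      assert (HV1 : forall s, inI a b s -> Derive v s = 0).
      { intros s Hs. destruct (Hd2 s Hs) as [_ Hvs].
        assert (L : locally s (fun y => p1 * cos (v y) + p2 * sin (v y) = 0)).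
        { apply filter_imp with (2 := inI_loc a b s Hs). auto. }
        pose proof (Derive_loc_const _ _ _ L) as D0.
        assert (Dd : is_derive (fun y => p1 * cos (v y) + p2 * sin (v y)) s
                 ((- p1 * sin (v s) + p2 * cos (v s)) * Derive v s)).
        { auto_derive; auto. eta_fix. ring. }
        assert (D1 : (- p1 * sin (v s) + p2 * cos (v s)) * Derive v s = 0)
          by (rewrite <- (is_derive_unique _ _ _ Dd); exact D0).
        apply Rmult_integral in D1. destruct D1 as [D1|D1]; auto. exfalso.
        pose proof (Hw s Hs) as W. pose proof (cs2 (v s)) as CS.
        assert (Q1 : p1 = cos (v s) * (p1 * cos (v s) + p2 * sin (v s)) - sin (v s) * (- p1 * sin (v s) + p2 * cos (v s))).
        { transitivity (p1 * (cos (v s) ^ 2 + sin (v s) ^ 2)); [rewrite CS; ring| ring]. }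
        assert (Q2 : p2 = sin (v s) * (p1 * cos (v s) + p2 * sin (v s)) + cos (v s) * (- p1 * sin (v s) + p2 * cos (v s))).
        { transitivity (p2 * (cos (v s) ^ 2 + sin (v s) ^ 2)); [rewrite CS; ring| ring]. }
        rewrite W, D1 in Q1, Q2. apply Hc0. tri; lra. }
      rewrite (HV1 t Ht), (D2_zero a b v t Ht HV1).
      apply alg_geo; [lra|lra|].
      rewrite pow2_sqrt by lra. unfold S2f. rewrite (HV1 t Ht). ring.
    + assert (Hur : forall s, inI a b s -> u s = r).
      { intros s Hs. destruct (Hcirc s Hs) as [w Hw]. unfold gamma, Psi in Hw.
        injection Hw. intros Ec _ _. pose proof (Hpos s Hs) as Hps.
        pose proof (ch2sh2 (u s)). pose proof (ch2sh2 r).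
        pose proof (sinh_pos _ Hps). pose proof (sinh_pos _ Hr).
        assert (Es : sinh (u s) = sinh r).
        { assert (sinh (u s) ^ 2 = sinh r ^ 2) by (rewrite Ec in *; lra). nra. }
        destruct (Rtotal_order (u s) r) as [Lt|[Eq|Gt]]; auto.
        - pose proof (sinh_lt _ _ Lt). lra.
        - pose proof (sinh_lt _ _ Gt). lra. }
      assert (HU1 : forall s, inI a b s -> Derive u s = 0).
      { intros s Hs. apply (Derive_loc_const _ r). apply filter_imp with (2 := inI_loc a b s Hs). auto. }
      rewrite (HU1 t Ht), (D2_zero a b u t Ht HU1).
      apply alg_circ; [lra|lra|lra| |].
      * rewrite pow2_sqrt by lra. unfold S2f. rewrite (HU1 t Ht). ring.
      * rewrite Har, (Hur t Ht). unfold coth. ring.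
Qed.
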